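(* Let $G$ be a finite group and $H$ a finite abelian group. Then $A_{G\times H}(t)=A_G(|H|t)$ and $B_{G\times H}(t)=B_G(|H|t)$.
   Context: For a finite group $G$ and $n\ge 0$, $G$ acts on $G^n$ by simultaneous conjugation. Let $G^{(n)}\subseteq G^n$ be the set of $n$-tuples of pairwise commuting elements. Let $\alpha_{G,n}$ (resp. $\beta_{G,n}$) be the number of $G$-orbits on $G^n$ (resp. on $G^{(n)}$), and set $A_G(t)=\sum_{n\ge0}\alpha_{G,n}t^n$, $B_G(t)=\sum_{n\ge0}\beta_{G,n}t^n$. *)

(* Defs.v *)
From mathcomp Require Import all_boot all_fingroup all_solvable.
Set Implicit Arguments. Unset Strict Implicit. Unset Printing Implicit Defensive.
Local Open Scope group_scope.

Definition tuples (gT : finGroupType) (G : {set gT}) (n : nat)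
  : {set {ffun 'I_n -> gT}} :=
  [set t : {ffun 'I_n -> gT} | [forall i, t i \in G]].

Definition ctuples (gT : finGroupType) (G : {set gT}) (n : nat)
  : {set {ffun 'I_n -> gT}} :=
  [set t in tuples G n | [forall i, forall j, t i * t j == t j * t i]].

Definition tconj (gT : finGroupType) (n : nat) (t : {ffun 'I_n -> gT}) (g : gT)
  : {ffun 'I_n -> gT} := [ffun i => t i ^ g].

Definition torbit (gT : finGroupType) (G : {set gT}) (n : nat)
  (t : {ffun 'I_n -> gT}) : {set {ffun 'I_n -> gT}} :=
  [set tconj t g | g in G].

Definition norbits (gT : finGroupType) (G : {set gT}) (n : nat)
  (X : {set {ffun 'I_n -> gT}}) : nat :=
  #|[set torbit G t | t in X]|.

Definition alpha (gT : finGroupType) (G : {set gT}) (n : nat) : nat :=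
  norbits G (tuples G n).
Definition beta (gT : finGroupType) (G : {set gT}) (n : nat) : nat :=
  norbits G (ctuples G n).

(* Main.v *)
Require Import Defs.
From mathcomp Require Import all_boot all_fingroup all_solvable.
Local Open Scope group_scope.

Section S.
Variables (gT hT : finGroupType) (G : {group gT}) (H : {group hT}) (n : nat).
Hypothesis abH : abelian H.

Definition tjoin (s : {ffun 'I_n -> gT}) (u : {ffun 'I_n -> hT})
  : {ffun 'I_n -> gT * hT} := [ffun i => (s i, u i)].

Lemma tjoin_inj s u s' u' : tjoin s u = tjoin s' u' -> s = s' /\ u = u'.
Proof.
move=> E; split; apply/ffunP=> i;
  have := congr1 (fun f : {ffun 'I_n -> gT * hT} => f i) E;
  rewrite /= !ffunE => -[]//.
Qed.

Lemma tjoin_split (t : {ffun 'I_n -> gT * hT}) :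
  t = tjoin [ffun i => (t i).1] [ffun i => (t i).2].
Proof. by apply/ffunP=> i; rewrite !ffunE; case: (t i). Qed.

Lemma torbit_join s u : u \in tuples H n ->
  torbit (setX G H) (tjoin s u) = [set tjoin s' u | s' in torbit G s].
Proof.
rewrite inE => /forallP uH.
have key g h : h \in H -> tconj (tjoin s u) (g, h) = tjoin (tconj s g) u.
  move=> hH; apply/ffunP=> i; rewrite !ffunE /=.
  have -> : (s i, u i) ^ (g, h) = (s i ^ g, u i ^ h) by [].
  by rewrite /conjg (centsP abH _ (uH i) _ hH) mulKg.
apply/setP=> t; apply/imsetP/imsetP.
- case=> -[g h]; rewrite inE /= => /andP[gG hH] ->.
  by exists (tconj s g); [apply/imsetP; exists g | rewrite key].
- case=> s' /imsetP[g gG ->] ->.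
  by exists (g, 1); [rewrite inE /= gG group1 | rewrite key ?group1].
Qed.

Lemma count_orbits (X1 : {set {ffun 'I_n -> gT}}) :
  norbits (setX G H) [set tjoin s u | s in X1, u in tuples H n]
  = (#|H| ^ n * norbits G X1)%N.
Proof.
pose F (O : {set {ffun 'I_n -> gT}}) u := [set tjoin s' u | s' in O].
have E : [set torbit (setX G H) t | t in [set tjoin s u | s in X1, u in tuples H n]]
   = [set F O u | O in [set torbit G s | s in X1], u in tuples H n].
  apply/setP=> O; apply/imsetP/imset2P.
  - case=> t /imset2P[s u sX uH ->] ->.
    by exists (torbit G s) u => //; [apply/imsetP; exists s | rewrite torbit_join].
  - case=> O1 u /imsetP[s sX ->] uH ->.
    exists (tjoin s u); first by apply/imset2P; exists s u.
    by rewrite torbit_join.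
rewrite /norbits E curry_imset2X card_in_imset; last first.
  move=> [O1 u] [O2 u']; rewrite !inE /= => /andP[/imsetP[s1 _ ->] _]
     /andP[/imsetP[s2 _ ->] _] /= EF.
  have : tjoin s1 u \in F (torbit G s1) u.
    by apply/imsetP; exists s1 => //; apply/imsetP; exists 1; rewrite ?conjg1 //;
      apply/ffunP=> i; rewrite ffunE conjg1.
  rewrite EF => /imsetP[s' _ /tjoin_inj[_ eu]]; subst u'.
  congr pair; apply: (imset_inj (f := tjoin^~ u)) => // a b /tjoin_inj[]//.
rewrite cardsX mulnC; congr muln.
have -> : tuples H n = [set t in ffun_on (mem H)].
  by apply/setP=> t; rewrite !inE; apply/forallP/ffun_onP.
by rewrite cardsE card_ffun_on card_ord.
Qed.
End S.

Theorem corollary4p6 (gT hT : finGroupType) (G : {group gT}) (H : {group hT}) :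
  abelian H ->
  (forall n : nat, alpha (setX G H) n = (#|H| ^ n * alpha G n)%N) /\
  (forall n : nat, beta (setX G H) n = (#|H| ^ n * beta G n)%N).
Proof.
move=> abH; split=> n.
- rewrite /alpha -count_orbits //; congr norbits.
  apply/setP=> t; apply/idP/imset2P.
  + rewrite inE => /forallP tG; rewrite (@tjoin_split _ _ _ t).
    have tG1 i : (t i).1 \in G by have := tG i; rewrite inE => /andP[].
    have tG2 i : (t i).2 \in H by have := tG i; rewrite inE => /andP[].
    exists [ffun i => (t i).1] [ffun i => (t i).2] => //;
      rewrite inE; apply/forallP=> i; rewrite ffunE //.
  + case=> s u; rewrite !inE => /forallP sG /forallP uH ->.
    by apply/forallP=> i; rewrite ffunE inE /= sG uH.
- rewrite /beta -count_orbits //; congr norbits.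
  apply/setP=> t; apply/idP/imset2P.
  + rewrite !inE => /andP[/forallP tG /forallP tC]; rewrite (@tjoin_split _ _ _ t).
    have tG1 i : (t i).1 \in G by have := tG i; rewrite inE => /andP[].
    have tG2 i : (t i).2 \in H by have := tG i; rewrite inE => /andP[].
    exists [ffun i => (t i).1] [ffun i => (t i).2] => //; rewrite !inE.
    * apply/andP; split; apply/forallP=> i; first by rewrite ffunE.
      apply/forallP=> j; rewrite !ffunE.
      by have /forallP/(_ j)/eqP := tC i; case: (t i) => ? ?; case: (t j) => ? ? [->].
    * by apply/forallP=> i; rewrite ffunE.
  + case=> s u; rewrite !inE => /andP[/forallP sG /forallP sC] /forallP uH ->.
    apply/andP; split; apply/forallP=> i; first by rewrite ffunE inE /= sG uH.
    apply/forallP=> j; rewrite !ffunE.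
    have /forallP/(_ j)/eqP E1 := sC i.
    have E2 : u i * u j = u j * u i by apply: (centsP abH).
    apply/eqP; change ((s i * s j, u i * u j) = (s j * s i, u j * u i)).
    by rewrite E1 E2.
Qed.
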